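(* If $X$ is a metric space with weak hyperbolic property C, then $X$ has Yu's property A.
   Context: For $R>0$, a family $\mathcal U$ of nonempty subsets of a metric space is $R$-disjoint if $d(A,B)>R$ for all distinct $A,B\in\mathcal U$, where $d(A,B)=\inf\{d(a,b):a\in A,b\in B\}$. $B_r(x)$ denotes the open ball of radius $r$ about $x$. A subset $U\subset X$ is $(N,R)$-large scale doubling if for every $x\in X$ and every $r\ge R$, $B_{2r}(x)\cap U$ can be covered by $N$ balls of radius $r$ with centers in $X$. A family $\mathcal U$ of subsets of $X$ is weakly uniformly large scale doubling if there is $(N,R)$ such that each $U\in\mathcal U$ is $(N,R)$-large scale doubling. $X$ has weak hyperbolic property C if for every sequence $R_0,R_1,\dots$ of positive reals there exist $n\ge0$ and $R_i$-disjoint families $\mathcal U_i$ ($i=0,\dots,n$) such that $\bigcup_{i=0}^n\mathcal U_i$ is a weakly uniformly large scale doubling cover of $X$. Property A is Yu's coarse amenability property: for a (discrete) metric space $X$, for every $R>0$ and $\varepsilon>0$ there exist $S>0$ and a family $\{A_x\}_{x\in X}$ of finite nonempty subsets of $X\times\mathbb N$ such that $(x,1)\in A_x$ and $A_x\subset B_S(x)\times\mathbb N$ for all $x$, and $|A_x\triangle A_y|/|A_x\cap A_y|<\varepsilon$ whenever $d(x,y)<R$. *)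

(* Defs.v *)
From Stdlib Require Import Reals List.
Open Scope R_scope.

Record MetricSpace := {
  carrier :> Type;
  dist : carrier -> carrier -> R;
  dist_nonneg : forall x y, 0 <= dist x y;
  dist_eq0 : forall x y, dist x y = 0 <-> x = y;
  dist_sym : forall x y, dist x y = dist y x;
  dist_tri : forall x y z, dist x z <= dist x y + dist y z
}.

Section Defs.
Variable X : MetricSpace.

Definition subset := X -> Prop.
Definition family := subset -> Prop.

Definition ball (x : X) (r : R) : subset := fun y => dist X x y < r.

Definition same_set (A B : subset) : Prop := forall x, A x <-> B x.

(* d(A,B) > R, i.e. inf { d(a,b) : a in A, b in B } > R *)
Definition setdist_gt (A B : subset) (R0 : R) : Prop :=
  exists delta, R0 < delta /\ forall a b, A a -> B b -> delta <= dist X a b.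

Definition R_disjoint (R0 : R) (U : family) : Prop :=
  (forall A, U A -> exists x, A x) /\
  (forall A B, U A -> U B -> ~ same_set A B -> setdist_gt A B R0).

Definition ls_doubling (N : nat) (R0 : R) (U : subset) : Prop :=
  forall (x : X) (r : R), R0 <= r ->
    exists c : nat -> X,
      forall y, ball x (2 * r) y -> U y ->
        exists i, (i < N)%nat /\ ball (c i) r y.

Definition weakly_unif_ls_doubling (U : family) : Prop :=
  exists (N : nat) (R0 : R), forall A, U A -> ls_doubling N R0 A.

Definition is_cover (U : family) : Prop :=
  forall x : X, exists A, U A /\ A x.

Definition family_union (n : nat) (Us : nat -> family) : family :=
  fun A => exists i, (i <= n)%nat /\ Us i A.

Definition weak_hyperbolic_C : Prop :=
  forall Rs : nat -> R, (forall i, 0 < Rs i) ->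
    exists (n : nat) (Us : nat -> family),
      (forall i, (i <= n)%nat -> R_disjoint (Rs i) (Us i)) /\
      is_cover (family_union n Us) /\
      weakly_unif_ls_doubling (family_union n Us).

End Defs.

Definition has_card {T : Type} (P : T -> Prop) (n : nat) : Prop :=
  exists l : list T, NoDup l /\ (forall p, P p <-> In p l) /\ length l = n.

Definition is_finite {T : Type} (P : T -> Prop) : Prop := exists n, has_card P n.

Definition property_A (X : MetricSpace) : Prop :=
  forall R0 eps : R, 0 < R0 -> 0 < eps ->
    exists (S : R) (A : X -> (X * nat) -> Prop),
      0 < S /\
      (forall x, is_finite (A x)) /\
      (forall x, A x (x, 1%nat)) /\
      (forall x p, A x p -> dist X x (fst p) < S) /\
      (forall x y, dist X x y < R0 ->
         forall m k : nat,
           has_card (fun p => (A x p /\ ~ A y p) \/ (A y p /\ ~ A x p)) m ->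
           has_card (fun p => A x p /\ A y p) k ->
           INR m < eps * INR k).

(* Main.v *)
Require Import Defs.
From Stdlib Require Import Reals List Lra Lia Arith ZArith Cantor ClassicalEpsilon Classical PropExtensionality FunctionalExtensionality.
Import ListNotations.
Open Scope R_scope.

Notation Dst x y := (Defs.dist _ x y).

Definition dec (P : Prop) : bool := if excluded_middle_informative P then true else false.
Lemma decT (P : Prop) : P -> dec P = true.
Proof. unfold dec; destruct excluded_middle_informative; tauto. Qed.
Lemma decF (P : Prop) : ~ P -> dec P = false.
Proof. unfold dec; destruct excluded_middle_informative; tauto. Qed.
Lemma dec_spec (P : Prop) : dec P = true <-> P.
Proof. unfold dec; destruct excluded_middle_informative; split; intros; try tauto; discriminate. Qed.

Definition cnt (P : nat -> Prop) (l : list nat) : nat := length (filter (fun t => dec (P t)) l).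

Lemma cnt_cons P a l : cnt P (a :: l) = ((if dec (P a) then 1 else 0) + cnt P l)%nat.
Proof. unfold cnt; simpl; destruct (dec (P a)); reflexivity. Qed.
Lemma cnt_app P l1 l2 : cnt P (l1 ++ l2) = (cnt P l1 + cnt P l2)%nat.
Proof. unfold cnt; rewrite filter_app, length_app; reflexivity. Qed.
Lemma cnt_le P l : (cnt P l <= length l)%nat.
Proof. induction l; simpl; auto. rewrite cnt_cons. destruct (dec (P a)); simpl; lia. Qed.
Lemma cnt_full P l : (forall t, In t l -> P t) -> cnt P l = length l.
Proof. induction l; intros H; simpl; auto. rewrite cnt_cons, decT by (apply H; simpl; auto).
 rewrite IHl; auto. intros; apply H; simpl; auto. Qed.
Lemma cnt_pos P l : (1 <= cnt P l)%nat -> exists t, In t l /\ P t.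
Proof. induction l; simpl; intros H. unfold cnt in H; simpl in H; lia.
 rewrite cnt_cons in H. destruct (dec (P a)) eqn:E.
 - exists a; split; auto. apply (proj1 (dec_spec _)); auto.
 - destruct IHl as [t [? ?]]. lia. exists t; auto. Qed.
Lemma cnt_shift P Q a K : (forall t, P t -> Q (S t)) -> (cnt P (seq a K) <= cnt Q (seq (S a) K))%nat.
Proof. intros H; revert a; induction K; intros a; simpl. unfold cnt; simpl; lia.
 rewrite !cnt_cons. specialize (IHK (S a)).
 destruct (dec (P a)) eqn:E1; destruct (dec (Q (S a))) eqn:E2; try lia.
 apply (proj1 (dec_spec _)) in E1. apply H in E1. apply decT in E1. congruence. Qed.
Lemma cnt_seqS P a K : (cnt P (seq (S a) K) <= S (cnt P (seq a K)))%nat.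
Proof. assert (H1 : seq a (S K) = a :: seq (S a) K) by reflexivity.
 assert (H2 : seq a (S K) = seq a K ++ [a + K]%nat) by (rewrite seq_S; reflexivity).
 assert (E : cnt P (seq a (S K)) = cnt P (seq a (S K))) by reflexivity.
 rewrite H1 in E at 1. rewrite H2 in E. rewrite cnt_cons, cnt_app, cnt_cons in E.
 unfold cnt at 3 in E; simpl in E. destruct (dec (P a)); destruct (dec (P (a+K)%nat)); lia. Qed.

Definition lev (K : nat) (P : nat -> Prop) : nat := cnt P (seq 1 K).
Lemma lev_le K P : (lev K P <= K)%nat.
Proof. unfold lev. pose proof (cnt_le P (seq 1 K)). rewrite length_seq in H; auto. Qed.
Lemma lev_full K P : (forall t, (1 <= t)%nat -> P t) -> lev K P = K.
Proof. intros H; unfold lev; rewrite cnt_full. apply length_seq.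
 intros t Ht; apply in_seq in Ht; apply H; lia. Qed.
Lemma lev_shift K P Q : (forall t, P t -> Q (S t)) -> (lev K P <= S (lev K Q))%nat.
Proof. intros H; unfold lev. eapply Nat.le_trans. apply (cnt_shift P Q 1 K H). apply cnt_seqS. Qed.
Lemma lev_ge1 K P : (1 <= lev K P)%nat -> exists t, (1 <= t <= K)%nat /\ P t.
Proof. unfold lev; intros H; apply cnt_pos in H; destruct H as [t [Ht Pt]]; apply in_seq in Ht.
 exists t; split; auto; lia. Qed.
Lemma lev_ge2 K P : (2 <= lev K P)%nat -> exists t, (1 <= t < K)%nat /\ P t.
Proof. unfold lev; intros H. destruct K. unfold cnt in H; simpl in H; lia.
 rewrite seq_S, cnt_app in H. assert (1 <= cnt P (seq 1 K))%nat.
 { pose proof (cnt_le P [(1+K)%nat]). simpl length in H0. lia. }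
 apply cnt_pos in H0; destruct H0 as [t [Ht Pt]]; apply in_seq in Ht. exists t; split; auto; lia. Qed.

Lemma pigeon_aux {A} (l : list A) (m : nat) (Rel : A -> nat -> Prop) :
  NoDup l -> (forall a, In a l -> exists b, (b < m)%nat /\ Rel a b) ->
  (forall a a' b, In a l -> In a' l -> Rel a b -> Rel a' b -> a = a') ->
  exists lb, length lb = length l /\ NoDup lb /\ (forall b, In b lb -> (b < m)%nat /\ exists a, In a l /\ Rel a b).
Proof. induction l as [|a l IH]; intros Hnd Hex Hinj.
 - exists []; simpl; split; [reflexivity|split; [constructor|intros b Hb; destruct Hb]].
 - inversion Hnd; subst. destruct IH as [lb [L1 [L2 L3]]]; auto.
   + intros; apply Hex; simpl; auto.
   + intros; eapply Hinj; simpl; eauto.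
   + destruct (Hex a) as [b [Hb Rb]]; simpl; auto.
     exists (b :: lb); split; [simpl; congruence|split].
     * constructor; auto. intros Hin. destruct (L3 b Hin) as [_ [a' [Ha' Ra']]].
       assert (a = a') by (eapply Hinj; simpl; eauto). subst; contradiction.
     * intros b' [<-|Hin]. split; auto. exists a; simpl; auto.
       destruct (L3 b' Hin) as [? [a' [? ?]]]; split; auto; exists a'; simpl; auto. Qed.
Lemma pigeon {A} (l : list A) (m : nat) (Rel : A -> nat -> Prop) :
  NoDup l -> (forall a, In a l -> exists b, (b < m)%nat /\ Rel a b) ->
  (forall a a' b, In a l -> In a' l -> Rel a b -> Rel a' b -> a = a') -> (length l <= m)%nat.
Proof. intros H1 H2 H3. destruct (pigeon_aux l m Rel H1 H2 H3) as [lb [L1 [L2 L3]]].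
 rewrite <- L1. rewrite <- (length_seq m 0). apply NoDup_incl_length; auto.
 intros b Hb; apply in_seq; destruct (L3 b Hb); lia. Qed.

Fixpoint mexs (f c : nat) (l : list nat) : nat :=
  match f with 0 => c | S f' => if in_dec Nat.eq_dec c l then mexs f' (S c) l else c end.
Definition mex l := mexs (S (length l)) 0 l.
Lemma mexs_spec f c l : (mexs f c l <= c + f)%nat /\ (~ In (mexs f c l) l \/ forall t, (c <= t < c + f)%nat -> In t l).
Proof. revert c; induction f; intros c; simpl. split. lia. right; intros; lia.
 destruct (in_dec Nat.eq_dec c l). destruct (IHf (S c)) as [A B]. split. lia.
 destruct B as [B|B]; auto. right; intros t Ht. destruct (Nat.eq_dec t c); subst; auto. apply B; lia.
 split. lia. left; auto. Qed.
Lemma mex_spec l : (mex l <= S (length l))%nat /\ ~ In (mex l) l.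
Proof. unfold mex. destruct (mexs_spec (S (length l)) 0 l) as [A [B|B]]. split; auto.
 exfalso. assert (length (seq 0 (S (length l))) <= length l)%nat.
 { apply NoDup_incl_length. apply seq_NoDup. intros t Ht; apply in_seq in Ht; apply B; lia. }
 rewrite length_seq in H; lia. Qed.

Lemma list_finite {T} (l : list T) (P : T -> Prop) : (forall p, P p -> In p l) -> is_finite P.
Proof. intros H. 
 assert (Hd : forall a b : T, {a = b} + {a <> b}) by (intros; apply excluded_middle_informative).
 exists (length (filter (fun p => dec (P p)) (nodup Hd l))), (filter (fun p => dec (P p)) (nodup Hd l)).
 split. apply NoDup_filter, NoDup_nodup. split; auto. intros p; rewrite filter_In, nodup_In, dec_spec; split.
 intros; split; auto. tauto. Qed.
Lemma card_le {T} (P : T -> Prop) (n : nat) (l : list T) : has_card P n -> (forall p, P p -> In p l) -> (n <= length l)%nat.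
Proof. intros [l' [H1 [H2 H3]]] H. subst. apply NoDup_incl_length; auto. intros p Hp; apply H, H2; auto. Qed.
Lemma card_ge {T} (P : T -> Prop) (n : nat) (l : list T) : has_card P n -> NoDup l -> (forall p, In p l -> P p) -> (length l <= n)%nat.
Proof. intros [l' [H1 [H2 H3]]] Hn H. subst. apply NoDup_incl_length; auto. intros p Hp; apply H2, H; auto. Qed.

Lemma NoDup_flat_map' {A B} (f : A -> list B) (l : list A) : NoDup l -> (forall a, In a l -> NoDup (f a)) ->
  (forall a b x, In a l -> In b l -> a <> b -> In x (f a) -> In x (f b) -> False) -> NoDup (flat_map f l).
Proof. induction l; intros H1 H2 H3; simpl. constructor. inversion H1; subst. apply NoDup_app.
 - apply H2; simpl; auto.
 - apply IHl; auto. intros; apply H2; simpl; auto. intros a0 b0 z ? ? ? ? ?; apply (H3 a0 b0 z); simpl; auto.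
 - intros z Hx Hx'. apply in_flat_map in Hx'. destruct Hx' as [b [Hb Hxb]].
   apply (H3 a b z); simpl; auto. intro; subst; contradiction. Qed.

Definition rsum (f : nat -> R) (l : list nat) : R := fold_right (fun a acc => f a + acc) 0 l.
Lemma rsum_app f l1 l2 : rsum f (l1 ++ l2) = rsum f l1 + rsum f l2.
Proof. induction l1; simpl; [lra|rewrite IHl1; lra]. Qed.
Lemma rsum_le f g l : (forall a, In a l -> f a <= g a) -> rsum f l <= rsum g l.
Proof. induction l; simpl; intros; [lra|]. pose proof (H a (or_introl eq_refl)). pose proof (IHl (fun b Hb => H b (or_intror Hb))). lra. Qed.
Lemma rsum_plus f g l : rsum (fun a => f a + g a) l = rsum f l + rsum g l.
Proof. induction l; simpl; [lra|rewrite IHl; lra]. Qed.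
Lemma rsum_scal c f l : rsum (fun a => c * f a) l = c * rsum f l.
Proof. induction l; simpl; [lra|rewrite IHl; lra]. Qed.
Lemma rsum_nonneg f l : (forall a, In a l -> 0 <= f a) -> 0 <= rsum f l.
Proof. induction l; simpl; intros H; [lra|]. pose proof (H a (or_introl eq_refl)). pose proof (IHl (fun b Hb => H b (or_intror Hb))). lra. Qed.
Lemma rsum_ext f g l : (forall a, In a l -> f a = g a) -> rsum f l = rsum g l.
Proof. induction l; simpl; intros; auto. rewrite H, IHl; auto. Qed.
Lemma rsum_single f l a : In a l -> NoDup l -> (forall b, In b l -> 0 <= f b) -> f a <= rsum f l.
Proof. induction l; simpl; intros Ha Hnd Hpos. contradiction. inversion Hnd; subst. destruct Ha as [<-|Ha].
 pose proof (rsum_nonneg f l (fun b Hb => Hpos b (or_intror Hb))); lra.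
 pose proof (Hpos a0 (or_introl eq_refl)). pose proof (IHl Ha H2 (fun b Hb => Hpos b (or_intror Hb))). lra. Qed.
Lemma rsum_abs f l : Rabs (rsum f l) <= rsum (fun a => Rabs (f a)) l.
Proof. induction l; simpl. rewrite Rabs_R0; lra. eapply Rle_trans. apply Rabs_triang. lra. Qed.
Lemma rsum_INR (g : nat -> nat) l : INR (fold_right (fun a acc => g a + acc)%nat 0%nat l) = rsum (fun a => INR (g a)) l.
Proof. induction l; simpl; auto. rewrite plus_INR, IHl; auto. Qed.
Lemma length_flat_map_sum {A B} (f : A -> list B) (l : list A) :
  length (flat_map f l) = fold_right (fun a acc => length (f a) + acc)%nat 0%nat l.
Proof. induction l; simpl; auto. rewrite length_app, IHl; auto. Qed.

Lemma rsum_const c l : rsum (fun _ => c) l = c * INR (length l).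
Proof. induction l; simpl length; [simpl; lra|]. rewrite S_INR. simpl rsum. rewrite IHl; lra. Qed.

Definition enc (l m : nat) : nat := (2 + Cantor.to_nat (l, m))%nat.
Lemma enc_inj l m l' m' : enc l m = enc l' m' -> l = l' /\ m = m'.
Proof. unfold enc; intros H. assert (Cantor.to_nat (l,m) = Cantor.to_nat (l',m')) by lia.
 assert (Cantor.of_nat (Cantor.to_nat (l,m)) = Cantor.of_nat (Cantor.to_nat (l',m'))) by congruence.
 rewrite !cancel_of_to in H1. inversion H1; auto. Qed.

Lemma NoDup_map_inj {A B} (f : A -> B) l : (forall a b, f a = f b -> a = b) -> NoDup l -> NoDup (map f l).
Proof. intros Hf; induction l; intros H; simpl; constructor; inversion H; subst; auto.
 intros Hin; apply in_map_iff in Hin; destruct Hin as [b [E Hb]]. apply Hf in E; subst; contradiction. Qed.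

Lemma floor_bounds (r : R) : 0 <= r -> INR (Z.to_nat (Int_part r)) <= r /\ r < INR (Z.to_nat (Int_part r)) + 1.
Proof. intros H. destruct (base_Int_part r) as [H1 H2].
 assert (0 <= Int_part r)%Z.
 { destruct (Z_lt_le_dec (Int_part r) 0); auto.
   assert (Int_part r <= -1)%Z by lia. apply IZR_le in H0. lra. }
 rewrite INR_IZR_INZ, Z2Nat.id by auto. lra. Qed.

Section Discr.
Variable X : MetricSpace.
Variables (B : nat) (cen : X -> nat -> X) (w : X -> nat -> R) (T : R).
Definition hh (x : X) (l : nat) : nat := Z.to_nat (Int_part (T * w x l)).
Definition blkm (c : X) l (a n : nat) := map (fun m => (c, enc l m)) (seq a n).
Definition Lx x := (x, 1%nat) :: flat_map (fun l => blkm (cen x l) l 0 (hh x l)) (seq 0 B).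
Definition Aset x p := In p (Lx x).

Lemma In_blkm c l a n p : In p (blkm c l a n) <-> exists m, (a <= m < a + n)%nat /\ p = (c, enc l m).
Proof. unfold blkm; rewrite in_map_iff; split.
 intros [m [E Hm]]; apply in_seq in Hm; exists m; split; auto.
 intros [m [Hm E]]; exists m; split; auto; apply in_seq; auto. Qed.

Lemma Aset_iff x p : Aset x p <-> p = (x,1%nat) \/ exists l m, (l < B)%nat /\ (m < hh x l)%nat /\ p = (cen x l, enc l m).
Proof. unfold Aset, Lx; simpl; split.
 - intros [E|H]; [left; auto|right]. apply in_flat_map in H; destruct H as [l [Hl Hp]].
   apply in_seq in Hl; apply In_blkm in Hp; destruct Hp as [m [Hm E]]; exists l, m; repeat split; auto; lia.
 - intros [E|[l [m [Hl [Hm E]]]]]; [left; auto|right]. apply in_flat_map; exists l; split.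
   apply in_seq; lia. apply In_blkm; exists m; split; auto; lia. Qed.

Definition ceqb x y l := dec (cen x l = cen y l).
Definition symblk x y l := if ceqb x y l then blkm (cen x l) l (Nat.min (hh x l) (hh y l)) (Nat.max (hh x l) (hh y l) - Nat.min (hh x l) (hh y l))
  else blkm (cen x l) l 0 (hh x l) ++ blkm (cen y l) l 0 (hh y l).
Definition Lsym x y := (x,1%nat) :: (y,1%nat) :: flat_map (symblk x y) (seq 0 B).
Definition intblk x y l := if ceqb x y l then blkm (cen x l) l 0 (Nat.min (hh x l) (hh y l)) else [].
Definition Lint x y := flat_map (intblk x y) (seq 0 B).

Lemma enc_ne1 l m : enc l m <> 1%nat. Proof. unfold enc; lia. Qed.

Lemma sym_incl x y p : (Aset x p /\ ~ Aset y p) \/ (Aset y p /\ ~ Aset x p) -> In p (Lsym x y).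
Proof.
 assert (K : forall a b, (a = x /\ b = y) \/ (a = y /\ b = x) -> Aset a p -> ~ Aset b p ->
   p = (a,1%nat) \/ exists l, (l < B)%nat /\ In p (symblk x y l)).
 { intros a b Hab Ha Hb. apply Aset_iff in Ha. destruct Ha as [E|[l [m [Hl [Hm E]]]]]; [left; auto|right].
   exists l; split; auto. unfold symblk, ceqb. destruct (dec (cen x l = cen y l)) eqn:Ec.
   - apply (proj1 (dec_spec _)) in Ec. apply In_blkm. exists m. split.
     + assert (~ (m < hh b l)%nat). { intros Hmb. apply Hb, Aset_iff. right. exists l, m. repeat split; auto.
         rewrite E. f_equal. destruct Hab as [[-> ->]|[-> ->]]; congruence. }
       destruct Hab as [[-> ->]|[-> ->]]; lia.
     + rewrite E. f_equal. destruct Hab as [[-> ->]|[-> ->]]; congruence.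
   - apply in_or_app. destruct Hab as [[-> ->]|[-> ->]]; [left|right]; apply In_blkm; exists m; split; auto; lia. }
 intros H. unfold Lsym; simpl. destruct H as [[H1 H2]|[H1 H2]].
 - destruct (K x y (or_introl (conj eq_refl eq_refl)) H1 H2) as [E|[l [Hl Hp]]]; auto.
   right; right; apply in_flat_map; exists l; split; auto; apply in_seq; lia.
 - destruct (K y x (or_intror (conj eq_refl eq_refl)) H1 H2) as [E|[l [Hl Hp]]]; auto.
   right; right; apply in_flat_map; exists l; split; auto; apply in_seq; lia.
Qed.

Lemma int_incl x y p : In p (Lint x y) -> Aset x p /\ Aset y p.
Proof. unfold Lint; intros H; apply in_flat_map in H; destruct H as [l [Hl H]]. apply in_seq in Hl.
 unfold intblk, ceqb in H. destruct (dec (cen x l = cen y l)) eqn:Ec; [|contradiction].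
 apply (proj1 (dec_spec _)) in Ec. apply In_blkm in H. destruct H as [m [Hm E]].
 split; apply Aset_iff; right; exists l, m; repeat split; auto; try lia. rewrite E, Ec; auto. Qed.

Lemma int_nodup x y : NoDup (Lint x y).
Proof. unfold Lint. apply NoDup_flat_map'. apply seq_NoDup.
 - intros l _. unfold intblk. destruct (ceqb x y l). unfold blkm. apply NoDup_map_inj. 
   intros a b E; apply (f_equal snd) in E; cbn [snd] in E. apply enc_inj in E; tauto. apply seq_NoDup. constructor.
 - intros a b p _ _ Hab H1 H2. unfold intblk in *. destruct (ceqb x y a); [|contradiction].
   destruct (ceqb x y b); [|contradiction]. apply In_blkm in H1, H2. destruct H1 as [m [_ E1]]; destruct H2 as [m' [_ E2]].
   rewrite E1 in E2. apply (f_equal snd) in E2; cbn [snd] in E2. apply enc_inj in E2. tauto. Qed.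

Lemma Lx_finite x : is_finite (Aset x).
Proof. apply (list_finite (Lx x)). auto. Qed.

Hypothesis HT : 0 <= T.
Hypothesis Hw : forall x l, 0 <= w x l.

Lemma hh_b x l : INR (hh x l) <= T * w x l /\ T * w x l < INR (hh x l) + 1.
Proof. apply floor_bounds. apply Rmult_le_pos; auto. Qed.


Lemma INR_len_flat (f : nat -> list (X * nat)) l : INR (length (flat_map f l)) = rsum (fun a => INR (length (f a))) l.
Proof. rewrite length_flat_map_sum. apply (rsum_INR (fun a => length (f a))). Qed.

Definition dw x y l := if ceqb x y l then Rabs (w x l - w y l) else w x l + w y l.

Lemma len_blkm c l a n : length (blkm c l a n) = n.
Proof. unfold blkm; rewrite length_map, length_seq; auto. Qed.

Lemma len_symblk x y l : INR (length (symblk x y l)) <= T * dw x y l + 1.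
Proof. unfold symblk, dw. destruct (ceqb x y l).
 - rewrite len_blkm. destruct (hh_b x l); destruct (hh_b y l).
   assert (A1 : T * (w x l - w y l) <= T * Rabs (w x l - w y l)) by (apply Rmult_le_compat_l; auto; apply Rle_abs).
   assert (A2 : T * (w y l - w x l) <= T * Rabs (w x l - w y l)) by (apply Rmult_le_compat_l; auto; rewrite Rabs_minus_sym; apply Rle_abs).
   destruct (Nat.le_ge_cases (hh x l) (hh y l)).
   + rewrite Nat.max_r, Nat.min_l, minus_INR by auto. lra.
   + rewrite Nat.max_l, Nat.min_r, minus_INR by auto. lra.
 - rewrite length_app, !len_blkm, plus_INR. destruct (hh_b x l); destruct (hh_b y l). lra. Qed.

Lemma len_intblk x y l : 2 * INR (length (intblk x y l)) = INR (hh x l) + INR (hh y l) - INR (length (symblk x y l)).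
Proof. unfold intblk, symblk. destruct (ceqb x y l).
 - rewrite !len_blkm. destruct (Nat.le_ge_cases (hh x l) (hh y l)).
   + rewrite Nat.max_r, Nat.min_l, minus_INR by auto. lra.
   + rewrite Nat.max_l, Nat.min_r, minus_INR by auto. lra.
 - rewrite length_app, !len_blkm, plus_INR. simpl. lra. Qed.

Lemma counts x y eta m k : rsum (dw x y) (seq 0 B) <= eta ->
  has_card (fun p => (Aset x p /\ ~ Aset y p) \/ (Aset y p /\ ~ Aset x p)) m ->
  has_card (fun p => Aset x p /\ Aset y p) k ->
  INR m <= 2 + T * eta + INR B /\
  T * rsum (w x) (seq 0 B) + T * rsum (w y) (seq 0 B) - 3 * INR B - T * eta <= 2 * INR k.
Proof. intros Hd Hm Hk.
 assert (Hm' : (m <= length (Lsym x y))%nat) by (apply (card_le _ _ _ Hm), sym_incl).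
 assert (Hk' : (length (Lint x y) <= k)%nat) by (apply (card_ge _ _ _ Hk); [apply int_nodup| apply int_incl]).
 apply le_INR in Hm', Hk'.
 assert (E1 : INR (length (Lsym x y)) = 2 + rsum (fun a => INR (length (symblk x y a))) (seq 0 B)).
 { unfold Lsym. simpl length. rewrite !S_INR, INR_len_flat. lra. }
 assert (E2 : INR (length (Lint x y)) = rsum (fun a => INR (length (intblk x y a))) (seq 0 B)) by (unfold Lint; apply INR_len_flat).
 assert (S1 : rsum (fun a => INR (length (symblk x y a))) (seq 0 B) <= T * eta + INR B).
 { eapply Rle_trans. apply (rsum_le _ (fun a => T * dw x y a + 1)). intros; apply len_symblk.
   rewrite rsum_plus, rsum_scal, rsum_const, length_seq. assert (T * rsum (dw x y) (seq 0 B) <= T * eta) by (apply Rmult_le_compat_l; auto). lra. }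
 split. lra.
 assert (S2 : 2 * INR (length (Lint x y)) = rsum (fun a => INR (hh x a)) (seq 0 B) + rsum (fun a => INR (hh y a)) (seq 0 B) - rsum (fun a => INR (length (symblk x y a))) (seq 0 B)).
 { rewrite E2, <- rsum_scal. rewrite (rsum_ext _ (fun a => INR (hh x a) + INR (hh y a) + (-1) * INR (length (symblk x y a)))).
   rewrite !rsum_plus, rsum_scal. lra. intros; rewrite len_intblk; lra. }
 assert (S3 : forall z, T * rsum (w z) (seq 0 B) - INR B <= rsum (fun a => INR (hh z a)) (seq 0 B)).
 { intros z. rewrite <- rsum_scal. rewrite <- (length_seq B 0) at 2. rewrite <- (Rmult_1_l (INR (length (seq 0 B)))).
   rewrite <- rsum_const. assert (forall f g l, rsum f l - rsum g l = rsum (fun a => f a + (-1) * g a) l).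
   { intros. rewrite rsum_plus, rsum_scal; lra. } rewrite H. apply rsum_le. intros a _. destruct (hh_b z a); lra. }
 pose proof (S3 x); pose proof (S3 y). lra. Qed.
End Discr.

Lemma discretize (X : MetricSpace) (R0 eps S eta : R) (B : nat) (cen : X -> nat -> X) (w : X -> nat -> R) :
  0 < eps -> 0 < S -> 0 <= eta -> eta * (2 + eps) <= eps ->
  (forall x l, 0 <= w x l) -> (forall x l, Dst x (cen x l) < S) ->
  (forall x, 1 <= rsum (w x) (seq 0 B)) ->
  (forall x y, Dst x y < R0 -> rsum (dw X cen w x y) (seq 0 B) <= eta) ->
  exists A : X -> X * nat -> Prop,
    (forall x, is_finite (A x)) /\ (forall x, A x (x, 1%nat)) /\
    (forall x p, A x p -> Dst x (fst p) < S) /\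
    (forall x y, Dst x y < R0 -> forall m k : nat,
       has_card (fun p => (A x p /\ ~ A y p) \/ (A y p /\ ~ A x p)) m ->
       has_card (fun p => A x p /\ A y p) k -> INR m < eps * INR k).
Proof. intros Heps HS Heta Hee Hw Hc H1 Hd.
 set (T := (2 * (2 + INR B) + 3 * INR B * eps) / eps + 1).
 assert (HT : 0 <= T). { unfold T. pose proof (pos_INR B). assert (0 <= (2 * (2 + INR B) + 3 * INR B * eps) / eps).
   unfold Rdiv; apply Rmult_le_pos; [nra| left; apply Rinv_0_lt_compat; auto]. lra. }
 exists (Aset X B cen w T). split; [|split; [|split]].
 - intros; apply Lx_finite.
 - intros x; apply Aset_iff; left; auto.
 - intros x p Hp. apply Aset_iff in Hp. destruct Hp as [->|[l [m [_ [_ ->]]]]]; simpl.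
   rewrite (proj2 (dist_eq0 X x x)); auto. apply Hc.
 - intros x y Hxy m k Hm Hk. destruct (counts X B cen w T HT Hw x y eta m k (Hd x y Hxy) Hm Hk) as [C1 C2].
   pose proof (H1 x); pose proof (H1 y). pose proof (pos_INR B).
   assert (T * rsum (w x) (seq 0 B) >= T) by nra. assert (T * rsum (w y) (seq 0 B) >= T) by nra.
   assert (TE : T * eps = 2 * (2 + INR B) + 3 * INR B * eps + eps). { unfold T. field. lra. }
   assert (eps * INR k >= eps * (2 * T - 3 * INR B - T * eta) / 2) by nra.
   assert (T * eta * (2 + eps) <= T * eps) by nra.
   nra.
Qed.

Lemma pow2_gt (r s : R) : 0 < s -> exists m, r < 2 ^ m * s.
Proof. intros Hs. destruct (archimed (r / s)) as [H _].
 assert (forall n, INR n <= 2 ^ n). { induction n. simpl; lra. rewrite S_INR; simpl. pose proof (pow_R1_Rle 2 n). lra. }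
 destruct (Z_lt_le_dec (up (r / s)) 0).
 - exists 0%nat. simpl. assert (IZR (up (r/s)) <= 0) by (apply IZR_le; lia).
   assert (r / s < 0) by lra. assert (r < 0). { unfold Rdiv in H2. apply (Rmult_lt_compat_r s) in H2; auto.
   rewrite Rmult_assoc, Rinv_l, Rmult_1_r, Rmult_0_l in H2; lra. } lra.
 - exists (Z.to_nat (up (r / s))). rewrite <- (Z2Nat.id (up (r/s))) in H by auto. rewrite <- INR_IZR_INZ in H.
   pose proof (H0 (Z.to_nat (up (r / s)))). assert (r / s < 2 ^ Z.to_nat (up (r / s))) by lra.
   unfold Rdiv in H2. apply (Rmult_lt_compat_r s) in H2; auto.
   rewrite Rmult_assoc, Rinv_l, Rmult_1_r in H2; lra. Qed.

Section Inner.
Variable X : MetricSpace.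
Variables (V : subset X) (N : nat) (R1 s : R) (x0 : X).

Definition dprop (x : X) (r : R) (c : nat -> X) := forall y, ball X x (2 * r) y -> V y -> exists i, (i < N)%nat /\ ball X (c i) r y.
Definition dcent (x : X) (r : R) : nat -> X :=
  match excluded_middle_informative (exists c, dprop x r c) with
  | left H => proj1_sig (constructive_indefinite_description _ H)
  | right _ => fun _ => x end.

Fixpoint cover (x : X) (m : nat) : list X :=
  match m with 0 => [x] | S m' => flat_map (fun i => cover (dcent x (2 ^ m' * s) i) m') (seq 0 N) end.

Definition ecov (k : nat) : X := let (m, i) := Cantor.of_nat k in nth i (cover x0 m) x0.

Definition rel (k : nat) := exists v, V v /\ Dst (ecov k) v < s.

Definition near14 (k : nat) (p : nat * nat) := Dst (ecov (fst p)) (ecov k) < 14 * s.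

Definition step (st : list (nat * nat)) (k : nat) : list (nat * nat) :=
  if dec (rel k /\ forall p, In p st -> 4 * s <= Dst (ecov (fst p)) (ecov k))
  then (k, mex (map snd (filter (fun p => dec (near14 k p)) st))) :: st else st.
Fixpoint stt (k : nat) : list (nat * nat) := match k with 0 => [] | S k' => step (stt k') k' end.
Definition SEL (j c : nat) := In (j, c) (stt (S j)).

Lemma stt_idx k j c : In (j, c) (stt k) -> (j < k)%nat /\ SEL j c.
Proof. induction k; [simpl; contradiction|]. intros H. pose proof H as H0. simpl in H0; unfold step in H0.
 destruct (dec _).
 - destruct H0 as [E|H0]. inversion E; subst. split; [lia|]. exact H.
   destruct (IHk H0); split; auto; lia.
 - destruct (IHk H0); split; auto; lia. Qed.

Lemma stt_mono k k' p : (k <= k')%nat -> In p (stt k) -> In p (stt k').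
Proof. induction 1; auto. intros H'; simpl; unfold step; destruct (dec _); simpl; auto. Qed.

Lemma SEL_head j c : SEL j c -> rel j /\ (forall p, In p (stt j) -> 4 * s <= Dst (ecov (fst p)) (ecov j)) /\
   c = mex (map snd (filter (fun p => dec (near14 j p)) (stt j))).
Proof. unfold SEL; simpl; unfold step. destruct (dec _) eqn:E.
 - apply (proj1 (dec_spec _)) in E. intros [H|H]. inversion H; subst; tauto.
   apply stt_idx in H; lia.
 - intros H; apply stt_idx in H; lia. Qed.

Lemma SEL_sep j c j' c' : SEL j c -> SEL j' c' -> (j < j')%nat ->
  4 * s <= Dst (ecov j) (ecov j') /\ (Dst (ecov j) (ecov j') < 14 * s -> c <> c').
Proof. intros H1 H2 Hlt. destruct (SEL_head j' c' H2) as [_ [Hs Hc]].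
 assert (Hin : In (j,c) (stt j')) by (apply (stt_mono (S j)); auto). split.
 apply (Hs (j,c) Hin). intros Hd Ec. subst c'. destruct (mex_spec (map snd (filter (fun p => dec (near14 j' p)) (stt j')))) as [_ Hn].
 rewrite <- Ec in Hn. apply Hn. apply in_map_iff. exists (j,c); split; auto. apply filter_In; split; auto.
 apply decT; unfold near14; simpl; auto. Qed.

Lemma SEL_fun j c c' : SEL j c -> SEL j c' -> c = c'.
Proof. intros H1 H2. rewrite (proj2 (proj2 (SEL_head j c H1))), (proj2 (proj2 (SEL_head j c' H2))); auto. Qed.

Hypothesis spos : 0 < s.
Lemma SEL_cover k : rel k -> exists j c, SEL j c /\ Dst (ecov j) (ecov k) < 4 * s.
Proof. intros Hr. destruct (classic (forall p, In p (stt k) -> 4 * s <= Dst (ecov (fst p)) (ecov k))) as [H|H].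
 - exists k, (mex (map snd (filter (fun p => dec (near14 k p)) (stt k)))). split.
   unfold SEL; simpl; unfold step. rewrite decT by auto. left; auto.
   rewrite (proj2 (Defs.dist_eq0 X _ _) eq_refl). lra.
 - apply not_all_ex_not in H. destruct H as [[j c] H]. apply imply_to_and in H. destruct H as [Hin H].
   apply stt_idx in Hin. exists j, c. split. tauto. simpl in H. lra.
Qed.

Hypothesis HV : ls_doubling X N R1 V.
Hypothesis Hs1 : R1 <= s.

Lemma dcent_spec x r : R1 <= r -> dprop x r (dcent x r).
Proof. intros Hr. unfold dcent. destruct excluded_middle_informative as [H|H].
 - exact (proj2_sig (constructive_indefinite_description _ H)).
 - exfalso; apply H. exact (HV x r Hr). Qed.

Lemma cover_spec m : forall x y, Dst x y < 2 ^ m * s -> V y -> exists c, In c (cover x m) /\ Dst c y < s.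
Proof. induction m; intros x y Hd Hy.
 - exists x; simpl; split; auto. simpl in Hd; lra.
 - assert (Hr : R1 <= 2 ^ m * s). { pose proof (pow_R1_Rle 2 m). nra. }
   destruct (dcent_spec x (2 ^ m * s) Hr y) as [i [Hi Hb]]. unfold ball; simpl in Hd; lra. auto.
   destruct (IHm _ y Hb Hy) as [c [Hc Hcy]]. exists c; split; auto. simpl. apply in_flat_map.
   exists i; split; auto. apply in_seq; lia. Qed.

Lemma cover_len m : forall x, (length (cover x m) <= N ^ m)%nat.
Proof. induction m; intros x; simpl; auto. rewrite length_flat_map_sum.
 assert (forall l : list nat, (fold_right (fun a acc => length (cover (dcent x (2 ^ m * s) a) m) + acc) 0 l <= length l * N ^ m)%nat).
 { induction l; simpl; auto. specialize (IHm (dcent x (2 ^ m * s) a)). lia. }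
 specialize (H (seq 0 N)). rewrite length_seq in H. lia. Qed.

Lemma ecov_cover v : V v -> exists k, Dst (ecov k) v < s.
Proof. intros Hv. destruct (pow2_gt (Dst x0 v) s spos) as [m Hm].
 destruct (cover_spec m x0 v Hm Hv) as [c [Hc Hcv]]. apply (In_nth _ _ x0) in Hc. destruct Hc as [i [Hi E]].
 exists (Cantor.to_nat (m, i)). unfold ecov. rewrite cancel_of_to. rewrite E; auto. Qed.

Lemma point_cover x v : V v -> Dst x v < s -> exists j c, SEL j c /\ Dst x (ecov j) < 6 * s.
Proof. intros Hv Hxv. destruct (ecov_cover v Hv) as [k Hk].
 destruct (SEL_cover k) as [j [c [Hs Hd]]]. exists v; split; auto.
 exists j, c; split; auto. pose proof (Defs.dist_tri X x v (ecov k)). pose proof (Defs.dist_tri X x (ecov k) (ecov j)).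
 rewrite (Defs.dist_sym X v) in H. rewrite (Defs.dist_sym X (ecov k)) in H0. lra. Qed.

Lemma stt_nodup k : NoDup (map fst (stt k)).
Proof. induction k; simpl. constructor. unfold step; destruct (dec _); auto. simpl; constructor; auto.
 intros Hin; apply in_map_iff in Hin; destruct Hin as [[j c] [E Hin]]; simpl in E; subst.
 apply stt_idx in Hin; lia. Qed.

Lemma nodup_fst_filter (f : nat * nat -> bool) l : NoDup (map fst l) -> NoDup (map fst (filter f l)).
Proof. induction l; simpl; auto. intros H; inversion H; subst. destruct (f a); simpl; auto.
 constructor; auto. intros Hin; apply H2. apply in_map_iff in Hin; destruct Hin as [b [E Hb]].
 apply filter_In in Hb. apply in_map_iff; exists b; split; tauto. Qed.

Definition Mcol := (N ^ 4 + 2)%nat.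

Lemma SEL_color j c : SEL j c -> (c < Mcol)%nat.
Proof. intros H. destruct (SEL_head j c H) as [_ [_ Ec]].
 set (F := filter (fun p => dec (near14 j p)) (stt j)) in *.
 destruct (mex_spec (map snd F)) as [Hm _]. rewrite length_map in Hm.
 assert (length (map fst F) <= length (cover (ecov j) 4))%nat.
 { apply (pigeon _ _ (fun i b => exists v, V v /\ Dst (ecov i) v < s /\ Dst (nth b (cover (ecov j) 4) x0) v < s)).
   - apply nodup_fst_filter, stt_nodup.
   - intros i Hi. apply in_map_iff in Hi. destruct Hi as [[i' c'] [E Hi]]; simpl in E; subst i'.
     apply filter_In in Hi. destruct Hi as [Hi Hn]. apply (proj1 (dec_spec _)) in Hn. unfold near14 in Hn; simpl in Hn.
     apply stt_idx in Hi. destruct (SEL_head i c' (proj2 Hi)) as [[v [Hv Hiv]] _].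
     assert (Hjv : Dst (ecov j) v < 2 ^ 4 * s). { pose proof (Defs.dist_tri X (ecov j) (ecov i) v). rewrite (Defs.dist_sym X (ecov j) (ecov i)) in H0. simpl. lra. }
     destruct (cover_spec 4 (ecov j) v Hjv Hv) as [cc [Hcc Hccv]]. apply (In_nth _ _ x0) in Hcc. destruct Hcc as [b [Hb E]].
     exists b; split; auto. exists v; split; auto; split; auto. rewrite E; auto.
   - intros i i' b Hi Hi' [v [Hv [H1 H2]]] [v' [Hv' [H1' H2']]].
     assert (Si : exists c, SEL i c). { apply in_map_iff in Hi. destruct Hi as [[a c1] [E Ha]]; simpl in E; subst.
       apply filter_In in Ha. exists c1. apply (stt_idx j). tauto. }
     assert (Si' : exists c, SEL i' c). { apply in_map_iff in Hi'. destruct Hi' as [[a c1] [E Ha]]; simpl in E; subst.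
       apply filter_In in Ha. exists c1. apply (stt_idx j). tauto. }
     destruct Si as [ci Si]; destruct Si' as [ci' Si'].
     set (z := nth b (cover (ecov j) 4) x0) in *.
     assert (Dst (ecov i) (ecov i') < 4 * s).
     { pose proof (Defs.dist_tri X (ecov i) v (ecov i')). pose proof (Defs.dist_tri X v z (ecov i')). pose proof (Defs.dist_tri X z v' (ecov i')).
       rewrite (Defs.dist_sym X v z) in H3. rewrite (Defs.dist_sym X v' (ecov i')) in H4. lra. }
     destruct (Nat.lt_total i i') as [Hlt|[Heq|Hlt]]; auto.
     + destruct (SEL_sep i ci i' ci' Si Si' Hlt); lra.
     + destruct (SEL_sep i' ci' i ci Si' Si Hlt). rewrite Defs.dist_sym in H3; lra. }
 pose proof (cover_len 4 (ecov j)). rewrite length_map in H0. unfold Mcol. lia. Qed.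

End Inner.

Definition ddc (c : bool) (a b : R) := if c then Rabs (a - b) else a + b.

Lemma ddc_abs c a b : 0 <= a -> 0 <= b -> Rabs (a - b) <= ddc c a b.
Proof. intros; unfold ddc; destruct c. lra. unfold Rabs; destruct Rcase_abs; lra. Qed.

Lemma norm_dd (cb : nat -> bool) (a b : nat -> R) l A B : 0 < A -> 0 < B ->
  (forall i, 0 <= a i) -> (forall i, 0 <= b i) -> A = rsum a l -> B = rsum b l ->
  rsum (fun i => ddc (cb i) (a i / A) (b i / B)) l <= 2 * rsum (fun i => ddc (cb i) (a i) (b i)) l / A.
Proof. intros HA HB Ha Hb EA EB.
 set (k := Rabs (/ A - / B)).
 assert (P : forall i, ddc (cb i) (a i / A) (b i / B) <= ddc (cb i) (a i) (b i) * / A + b i * k).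
 { intros i. unfold ddc, k. assert (0 < / A) by (apply Rinv_0_lt_compat; auto).
   assert (E1 : b i / B = b i / A - b i * (/ A - / B)) by (unfold Rdiv; ring).
   assert (Rabs (b i * (/ A - / B)) = b i * Rabs (/ A - / B)) by (rewrite Rabs_mult, Rabs_right; auto; specialize (Hb i); lra).
   pose proof (Rle_abs (b i * (/ A - / B))). pose proof (Rle_abs (- (b i * (/ A - / B)))). rewrite Rabs_Ropp in H2.
   destruct (cb i).
   - rewrite E1. replace (a i / A - (b i / A - b i * (/ A - / B))) with ((a i - b i) * / A + b i * (/ A - / B)) by (unfold Rdiv; ring).
     eapply Rle_trans. apply Rabs_triang. rewrite Rabs_mult, (Rabs_right (/ A)) by lra. lra.
   - rewrite E1. unfold Rdiv. lra. }
 eapply Rle_trans. apply (rsum_le _ (fun i => ddc (cb i) (a i) (b i) * / A + b i * k)). intros; apply P.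
 rewrite rsum_plus. rewrite (rsum_ext (fun i => ddc (cb i) (a i) (b i) * / A) (fun i => / A * ddc (cb i) (a i) (b i))) by (intros; ring).
 rewrite (rsum_ext (fun i => b i * k) (fun i => k * b i)) by (intros; ring). rewrite !rsum_scal. rewrite <- EB.
 assert (Hk : B * k = Rabs (B - A) / A). { unfold k. replace (B - A) with (A * B * (/ A - / B)) by (field; lra).
   unfold Rdiv. rewrite !Rabs_mult, (Rabs_right A), (Rabs_right B) by lra. field; lra. }
 assert (HBA : Rabs (B - A) <= rsum (fun i => ddc (cb i) (a i) (b i)) l).
 { rewrite EA, EB. replace (rsum b l - rsum a l) with (rsum (fun i => b i + (-1) * a i) l) by (rewrite rsum_plus, rsum_scal; ring).
   eapply Rle_trans. apply rsum_abs. apply rsum_le. intros i _.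
   replace (b i + -1 * a i) with (-(a i - b i)) by ring. rewrite Rabs_Ropp. apply ddc_abs; auto. }
 assert (0 < / A) by (apply Rinv_0_lt_compat; auto).
 rewrite Rmult_comm with (r1 := k). rewrite Hk. unfold Rdiv. nra. Qed.

Section Inner2.
Variable X : MetricSpace.
Variables (V : subset X) (N : nat) (R1 s : R) (x0 : X) (Kp : nat) (Rr : R).
Local Notation SELv := (SEL X V N s x0).
Local Notation ecv := (ecov X V N s x0).
Local Notation M := (Mcol N).

Definition qual (x : X) (col j : nat) := SELv j col /\ Dst x (ecv j) < 7 * s.
Definition jx (x : X) (col : nat) : option nat :=
  match excluded_middle_informative (exists j, qual x col j) with
  | left H => Some (proj1_sig (constructive_indefinite_description _ H))
  | right _ => None end.
Definition Pj (x : X) (j t : nat) := Dst x (ecv j) < 6 * s + INR t * Rr.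
Definition psi (x : X) (col : nat) : nat := match jx x col with Some j => lev Kp (Pj x j) | None => 0%nat end.
Definition icen (x : X) (col : nat) : X := match jx x col with Some j => ecv j | None => x end.
Definition Ssum (x : X) : R := rsum (fun col => INR (psi x col)) (seq 0 M).
Definition gw (x : X) (col : nat) : R := INR (psi x col) / Ssum x.
Definition covered (x : X) := exists v, V v /\ Dst x v < s.

Hypothesis spos : 0 < s.
Hypothesis HV : ls_doubling X N R1 V.
Hypothesis Hs1 : R1 <= s.
Hypothesis Rpos : 0 < Rr.
Hypothesis HK : INR Kp * Rr <= s.
Hypothesis Kp1 : (1 <= Kp)%nat.

Lemma jx_some x col j : jx x col = Some j -> qual x col j.
Proof. unfold jx. destruct excluded_middle_informative as [H|H]; intros E; inversion E.
 exact (proj2_sig (constructive_indefinite_description _ H)). Qed.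
Lemma jx_none x col j : jx x col = None -> ~ qual x col j.
Proof. unfold jx. destruct excluded_middle_informative as [H|H]; intros E; inversion E. intros Hq; apply H; eauto. Qed.

Lemma qual_uniq x col j j' : qual x col j -> qual x col j' -> j = j'.
Proof. intros [S1 D1] [S2 D2].
 assert (Dst (ecv j) (ecv j') < 14 * s). { pose proof (Defs.dist_tri X (ecv j) x (ecv j')). rewrite (Defs.dist_sym X (ecv j) x) in H. lra. }
 destruct (Nat.lt_total j j') as [Hlt|[Heq|Hlt]]; auto.
 - destruct (SEL_sep X V N s x0 j col j' col S1 S2 Hlt) as [_ Hc]. exfalso; apply (Hc H); auto.
 - destruct (SEL_sep X V N s x0 j' col j col S2 S1 Hlt) as [_ Hc]. rewrite Defs.dist_sym in H. exfalso; apply (Hc H); auto. Qed.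

Lemma psi_small x y col j : jx x col = Some j -> (2 <= psi x col)%nat -> Dst x y < Rr -> qual y col j.
Proof. intros E H Hxy. unfold psi in H; rewrite E in H. destruct (jx_some _ _ _ E) as [Sj _].
 apply lev_ge2 in H. destruct H as [t [Ht Pt]]. unfold Pj in Pt. split; auto.
 assert (INR t + 1 <= INR Kp) by (rewrite <- S_INR; apply le_INR; lia).
 pose proof (Defs.dist_tri X y x (ecv j)). rewrite (Defs.dist_sym X y x) in H0. nra. Qed.

Lemma psi_lip x y col j : jx x col = Some j -> jx y col = Some j -> Dst x y < Rr -> (psi x col <= S (psi y col))%nat.
Proof. intros E1 E2 Hxy. unfold psi; rewrite E1, E2. apply lev_shift. intros t Pt; unfold Pj in *.
 rewrite S_INR. pose proof (Defs.dist_tri X y x (ecv j)). rewrite (Defs.dist_sym X y x) in H. nra. Qed.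

Lemma psi_col_diff x y col : Dst x y < Rr ->
  ddc (dec (icen x col = icen y col)) (INR (psi x col)) (INR (psi y col)) <= 2.
Proof. intros Hxy. assert (Hyx : Dst y x < Rr) by (rewrite Defs.dist_sym; auto).
 assert (G : forall a b, 0 <= a <= 1 -> 0 <= b <= 1 -> forall c, ddc c a b <= 2).
 { intros a b Ha Hb c; unfold ddc; destruct c; [unfold Rabs; destruct Rcase_abs|]; lra. }
 assert (Small : forall (z w : X) j, jx z col = Some j -> jx w col <> Some j -> Dst z w < Rr -> (psi z col <= 1)%nat).
 { intros z w j Ez Ew Hzw. destruct (Nat.le_gt_cases (psi z col) 1); auto. exfalso.
   pose proof (psi_small z w col j Ez H Hzw). destruct (jx w col) eqn:Ew'.
   - apply Ew. f_equal. apply (qual_uniq w col); auto. apply jx_some; auto.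
   - apply (jx_none w col j Ew' H0). }
 assert (P0 : forall z, 0 <= INR (psi z col)) by (intros; apply pos_INR).
 destruct (jx x col) eqn:Ex; destruct (jx y col) eqn:Ey.
 - destruct (Nat.eq_dec n n0).
   + subst n0. unfold icen; rewrite Ex, Ey. rewrite decT by auto. unfold ddc.
     pose proof (psi_lip x y col n Ex Ey Hxy). pose proof (psi_lip y x col n Ey Ex Hyx).
     apply le_INR in H, H0. rewrite S_INR in H, H0. unfold Rabs; destruct Rcase_abs; lra.
   + assert (psi x col <= 1)%nat by (apply (Small x y n); auto; rewrite Ey; congruence).
     assert (psi y col <= 1)%nat by (apply (Small y x n0); auto; rewrite Ex; congruence).
     apply le_INR in H, H0. simpl in H, H0. apply G; split; auto.
 - assert (psi x col <= 1)%nat by (apply (Small x y n); auto; rewrite Ey; congruence).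
   assert (psi y col = 0)%nat by (unfold psi; rewrite Ey; auto).
   apply le_INR in H. rewrite H0. simpl in H |- *. apply G; split; auto; lra.
 - assert (psi y col <= 1)%nat by (apply (Small y x n); auto; rewrite Ex; congruence).
   assert (psi x col = 0)%nat by (unfold psi; rewrite Ex; auto).
   apply le_INR in H. rewrite H0. simpl in H |- *. apply G; split; auto; lra.
 - assert (psi y col = 0)%nat by (unfold psi; rewrite Ey; auto).
   assert (psi x col = 0)%nat by (unfold psi; rewrite Ex; auto). rewrite H, H0. apply G; simpl; lra. Qed.

Lemma inner_diff x y : Dst x y < Rr ->
  rsum (fun col => ddc (dec (icen x col = icen y col)) (INR (psi x col)) (INR (psi y col))) (seq 0 M) <= 2 * INR M.
Proof. intros H. eapply Rle_trans. apply (rsum_le _ (fun _ => 2)). intros; apply psi_col_diff; auto.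
 rewrite rsum_const, length_seq. lra. Qed.

Lemma inner_sum x : covered x -> INR Kp <= Ssum x.
Proof. intros [v [Hv Hxv]]. destruct (point_cover X V N R1 s x0 spos HV Hs1 x v Hv Hxv) as [j [c [Sj Dj]]].
 assert (Hc : (c < M)%nat) by (eapply (SEL_color X V N R1 s x0); eauto).
 assert (Q : qual x c j) by (split; auto; lra).
 destruct (jx x c) eqn:E.
 - assert (n = j) by (apply (qual_uniq x c); auto; apply jx_some; auto). subst n.
   assert (psi x c = Kp). { unfold psi; rewrite E. apply lev_full. intros t Ht. unfold Pj.
     apply le_INR in Ht. simpl in Ht. nra. }
   unfold Ssum. rewrite <- H. apply (rsum_single (fun col => INR (psi x col))). apply in_seq; lia. apply seq_NoDup.
   intros; apply pos_INR.
 - exfalso; apply (jx_none x c j E Q). Qed.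

Lemma Kp_pos : 0 < INR Kp.
Proof. apply lt_0_INR; lia. Qed.

Lemma inner_gsum x : covered x -> rsum (gw x) (seq 0 M) = 1.
Proof. intros H. pose proof (inner_sum x H). pose proof Kp_pos. unfold gw.
 rewrite (rsum_ext _ (fun col => / Ssum x * INR (psi x col))) by (intros; unfold Rdiv; ring).
 rewrite rsum_scal. fold (Ssum x). field. lra. Qed.

Lemma gw_nonneg x col : covered x -> 0 <= gw x col.
Proof. intros H. pose proof (inner_sum x H). pose proof Kp_pos. unfold gw. unfold Rdiv. apply Rmult_le_pos. apply pos_INR.
 left; apply Rinv_0_lt_compat; lra. Qed.

Lemma inner_gdiff x y : covered x -> covered y -> Dst x y < Rr ->
  rsum (fun col => ddc (dec (icen x col = icen y col)) (gw x col) (gw y col)) (seq 0 M) <= 4 * INR M / INR Kp.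
Proof. intros Hx Hy Hxy. pose proof (inner_sum x Hx). pose proof (inner_sum y Hy). pose proof Kp_pos.
 eapply Rle_trans. apply (norm_dd (fun col => dec (icen x col = icen y col)) (fun col => INR (psi x col)) (fun col => INR (psi y col)) (seq 0 M) (Ssum x) (Ssum y)); try lra; auto; intros; apply pos_INR.
 pose proof (inner_diff x y Hxy). apply Rmult_le_compat_l with (r := 2) in H2; [|lra].
 unfold Rdiv. apply Rle_trans with (2 * (2 * INR M) * / Ssum x).
 apply Rmult_le_compat_r; [left; apply Rinv_0_lt_compat; lra | lra].
 assert (0 <= INR M) by apply pos_INR.
 apply Rle_trans with (4 * INR M * / INR Kp). 2: lra. 
 replace (2 * (2 * INR M)) with (4 * INR M) by ring. apply Rmult_le_compat_l. lra.
 apply Rinv_le_contravar; lra. Qed.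

End Inner2.

Lemma ddc_scale c p q a b : 0 <= p -> 0 <= q -> 0 <= a -> 0 <= b ->
  ddc c (p * a) (q * b) <= Rabs (p - q) * b + p * ddc c a b.
Proof. intros. unfold ddc. pose proof (Rle_abs (p - q)). pose proof (Rle_abs (-(p - q))). rewrite Rabs_Ropp in H4.
 destruct c.
 - replace (p * a - q * b) with (p * (a - b) + (p - q) * b) by ring. eapply Rle_trans. apply Rabs_triang.
   rewrite !Rabs_mult, (Rabs_right p), (Rabs_right b) by lra. lra.
 - nra. Qed.
Lemma ddc_nonneg c a b : 0 <= a -> 0 <= b -> 0 <= ddc c a b.
Proof. intros; unfold ddc; destruct c; [apply Rabs_pos|lra]. Qed.
Lemma ddc_le_sum c a b : 0 <= a -> 0 <= b -> ddc c a b <= a + b.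
Proof. intros; unfold ddc; destruct c; [unfold Rabs; destruct Rcase_abs|]; lra. Qed.

Lemma pow2_ge1 i : (1 <= 2 ^ i)%nat.
Proof. induction i; simpl; lia. Qed.


Lemma rsum_shift f a m : rsum f (seq a m) = rsum (fun c => f (a + c)%nat) (seq 0 m).
Proof. induction m. reflexivity. rewrite !seq_S, !rsum_app, IHm. simpl. lra. Qed.

Lemma rsum_block f k m : rsum f (seq 0 (k * m)) = rsum (fun i => rsum (fun c => f (i * m + c)%nat) (seq 0 m)) (seq 0 k).
Proof. induction k. reflexivity. replace (S k * m)%nat with (k * m + m)%nat by lia.
 rewrite seq_app, rsum_app, IHk, seq_S, rsum_app, (rsum_shift f). cbn [rsum fold_right]. simpl plus. lra. Qed.

Lemma geo k a : rsum (fun i => / 2 ^ i) (seq a k) <= 2 * / 2 ^ a.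
Proof. revert a; induction k; intros a; simpl. left; apply Rmult_lt_0_compat; [lra|apply Rinv_0_lt_compat, pow_lt; lra].
 pose proof (IHk (S a)). simpl in H. rewrite Rinv_mult in H. lra. Qed.

Lemma divmod_block i c m : (c < m)%nat -> ((i * m + c) / m = i /\ (i * m + c) mod m = c)%nat.
Proof. intros H. split; symmetry. apply Nat.div_unique with c; lia. apply Nat.mod_unique with i; lia. Qed.

Section Final.
Variable X : MetricSpace.
Variables (R0 : R) (Q n : nat) (Us : nat -> Defs.family X) (N : nat) (R1 s : R) (x0 : X) (Kp : nat).
Local Notation M := (Mcol N).
Definition Ki (i : nat) : nat := (Q * 2 ^ i)%nat.
Definition Rsq (i : nat) : R := 2 * INR (Ki i) * R0 + 1.
Hypothesis R0pos : 0 < R0.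
Hypothesis Q1 : (1 <= Q)%nat.
Hypothesis Hdisj : forall i, (i <= n)%nat -> R_disjoint X (Rsq i) (Us i).
Hypothesis Hdbl : forall A, family_union X n Us A -> ls_doubling X N R1 A.
Hypothesis spos : 0 < s.
Hypothesis Hs1 : R1 <= s.
Hypothesis HKs : forall i, (i <= n)%nat -> INR (Ki i) * R0 <= s.
Hypothesis HKp : INR Kp * R0 <= s.
Hypothesis Kp1 : (1 <= Kp)%nat.

Definition nearV (x : X) (i : nat) (V : subset X) := Us i V /\ exists v, V v /\ Dst x v < INR (Ki i) * R0.
Definition Vx (x : X) (i : nat) : option (subset X) :=
  match excluded_middle_informative (exists V, nearV x i V) with
  | left H => Some (proj1_sig (constructive_indefinite_description _ H))
  | right _ => None end.
Definition phi (x : X) (i : nat) (V : subset X) : nat := lev (Ki i) (fun t => exists v, V v /\ Dst x v < INR t * R0).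
Definition pw (x : X) (i : nat) (V : subset X) : R := INR (phi x i V) / INR (Ki i).
Definition wfam (x : X) (i c : nat) : R := match Vx x i with Some V => pw x i V * gw X V N s x0 Kp R0 x c | None => 0 end.
Definition cfam (x : X) (i c : nat) : X := match Vx x i with Some V => icen X V N s x0 x c | None => x end.

Lemma Ki_ge1 i : (1 <= Ki i)%nat.
Proof. unfold Ki. pose proof (pow2_ge1 i). nia. Qed.
Lemma Ki_pos i : 0 < INR (Ki i).
Proof. apply lt_0_INR. pose proof (Ki_ge1 i); lia. Qed.

Lemma Vx_some x i V : Vx x i = Some V -> nearV x i V.
Proof. unfold Vx. destruct excluded_middle_informative as [H|H]; intros E; inversion E.
 exact (proj2_sig (constructive_indefinite_description _ H)). Qed.
Lemma Vx_none x i V : Vx x i = None -> ~ nearV x i V.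
Proof. unfold Vx. destruct excluded_middle_informative as [H|H]; intros E; inversion E. intros Hq; apply H; eauto. Qed.

Lemma near_uniq x i V V' : (i <= n)%nat -> nearV x i V -> nearV x i V' -> V = V'.
Proof. intros Hi [U1 [v [Hv Dv]]] [U2 [v' [Hv' Dv']]].
 destruct (classic (same_set X V V')) as [Hs|Hs].
 - apply functional_extensionality; intros z; apply propositional_extensionality; apply Hs.
 - exfalso. destruct (proj2 (Hdisj i Hi) V V' U1 U2 Hs) as [dl [Hdl Hd]]. specialize (Hd v v' Hv Hv').
   pose proof (Defs.dist_tri X v x v'). rewrite (Defs.dist_sym X v x) in H. unfold Rsq in Hdl. lra. Qed.

Lemma phi_le x i V : (phi x i V <= Ki i)%nat.
Proof. apply lev_le. Qed.
Lemma pw_bounds x i V : 0 <= pw x i V <= 1.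
Proof. unfold pw. pose proof (Ki_pos i). pose proof (phi_le x i V). apply le_INR in H0. split.
 unfold Rdiv; apply Rmult_le_pos; [apply pos_INR|left; apply Rinv_0_lt_compat; auto].
 unfold Rdiv. apply (Rmult_le_reg_r (INR (Ki i))); auto. rewrite Rmult_assoc, Rinv_l by lra. lra. Qed.

Lemma phi_small x y i V : Vx x i = Some V -> (2 <= phi x i V)%nat -> Dst x y < R0 -> nearV y i V.
Proof. intros E H Hxy. destruct (Vx_some _ _ _ E) as [U _]. split; auto.
 apply lev_ge2 in H. destruct H as [t [Ht [v [Hv Dv]]]]. exists v; split; auto.
 assert (INR t + 1 <= INR (Ki i)) by (rewrite <- S_INR; apply le_INR; lia).
 pose proof (Defs.dist_tri X y x v). rewrite (Defs.dist_sym X y x) in H0. nra. Qed.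

Lemma phi_lip x y i V : Dst x y < R0 -> (phi x i V <= S (phi y i V))%nat.
Proof. intros Hxy. apply lev_shift. intros t [v [Hv Dv]]. exists v; split; auto. rewrite S_INR.
 pose proof (Defs.dist_tri X y x v). rewrite (Defs.dist_sym X y x) in H. nra. Qed.

Lemma near_covered x i V : (i <= n)%nat -> nearV x i V -> covered X V s x.
Proof. intros Hi [_ [v [Hv Dv]]]. exists v; split; auto. pose proof (HKs i Hi). lra. Qed.
Lemma near_dbl x i V : (i <= n)%nat -> nearV x i V -> ls_doubling X N R1 V.
Proof. intros Hi [U _]. apply Hdbl. exists i; auto. Qed.

Lemma gw_nn x i V c : (i <= n)%nat -> nearV x i V -> 0 <= gw X V N s x0 Kp R0 x c.
Proof. intros Hi H. apply (gw_nonneg X V N R1 s x0 Kp R0 spos (near_dbl x i V Hi H) Hs1 R0pos Kp1 x c (near_covered x i V Hi H)). Qed.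

Lemma wfam_nonneg x i c : (i <= n)%nat -> 0 <= wfam x i c.
Proof. intros Hi. unfold wfam. destruct (Vx x i) eqn:E; [|lra]. apply Vx_some in E.
 apply Rmult_le_pos. apply pw_bounds. eapply gw_nn; eauto. Qed.

Lemma gsum_le x i V : (i <= n)%nat -> nearV x i V -> rsum (gw X V N s x0 Kp R0 x) (seq 0 M) = 1.
Proof. intros Hi H. apply (inner_gsum X V N R1 s x0 Kp R0 spos (near_dbl x i V Hi H) Hs1 R0pos Kp1 x (near_covered x i V Hi H)). Qed.

Lemma fam_diff x y i : (i <= n)%nat -> Dst x y < R0 ->
  rsum (fun c => ddc (dec (cfam x i c = cfam y i c)) (wfam x i c) (wfam y i c)) (seq 0 M) <= 2 / INR (Ki i) + 4 * INR M / INR Kp.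
Proof. intros Hi Hxy. assert (Hyx : Dst y x < R0) by (rewrite Defs.dist_sym; auto).
 pose proof (Ki_pos i) as KP. assert (KI : 0 < / INR (Ki i)) by (apply Rinv_0_lt_compat; auto). assert (0 <= 4 * INR M / INR Kp).
 { unfold Rdiv; apply Rmult_le_pos. pose proof (pos_INR M); lra. left; apply Rinv_0_lt_compat, lt_0_INR; lia. }
 assert (Small : forall z w V, Vx z i = Some V -> Vx w i <> Some V -> Dst z w < R0 -> pw z i V <= 1 / INR (Ki i)).
 { intros z w V Ez Ew Hzw. destruct (Nat.le_gt_cases (phi z i V) 1).
   - unfold pw. apply le_INR in H0. unfold Rdiv. apply Rmult_le_compat_r. left; apply Rinv_0_lt_compat; auto. simpl in H0; lra.
   - exfalso. pose proof (phi_small z w i V Ez H0 Hzw). destruct (Vx w i) eqn:Ew'.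
     + apply Ew. f_equal. apply (near_uniq w i); auto. apply Vx_some; auto.
     + apply (Vx_none w i V Ew' H1). }
 assert (One : forall z V, Vx z i = Some V -> pw z i V <= 1 / INR (Ki i) ->
    rsum (fun c => pw z i V * gw X V N s x0 Kp R0 z c) (seq 0 M) <= 1 / INR (Ki i)).
 { intros z V Ez Hp. rewrite rsum_scal. rewrite gsum_le with (i := i); auto. lra. apply Vx_some; auto. }
 destruct (Vx x i) as [V|] eqn:Ex; destruct (Vx y i) as [V'|] eqn:Ey.
 - pose proof (Vx_some _ _ _ Ex) as NX. pose proof (Vx_some _ _ _ Ey) as NY.
   destruct (classic (V = V')) as [<-|Hne].
   + unfold wfam, cfam; rewrite Ex, Ey.
     eapply Rle_trans. apply (rsum_le _ (fun c => Rabs (pw x i V - pw y i V) * gw X V N s x0 Kp R0 y c +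
            pw x i V * ddc (dec (icen X V N s x0 x c = icen X V N s x0 y c)) (gw X V N s x0 Kp R0 x c) (gw X V N s x0 Kp R0 y c))).
     { intros c _. apply ddc_scale; try apply pw_bounds; eapply gw_nn; eauto. }
     rewrite rsum_plus, !rsum_scal. rewrite gsum_le with (i := i); auto.
     pose proof (inner_gdiff X V N R1 s x0 Kp R0 spos (near_dbl x i V Hi NX) Hs1 R0pos HKp Kp1 x y (near_covered x i V Hi NX) (near_covered y i V Hi NY) Hxy).
     assert (Rabs (pw x i V - pw y i V) <= 1 / INR (Ki i)).
     { pose proof (phi_lip x y i V Hxy). pose proof (phi_lip y x i V Hyx). apply le_INR in H1, H2. rewrite S_INR in H1, H2.
       unfold pw. replace (INR (phi x i V) / INR (Ki i) - INR (phi y i V) / INR (Ki i)) with ((INR (phi x i V) - INR (phi y i V)) * / INR (Ki i)) by (unfold Rdiv; ring).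
       rewrite Rabs_mult, (Rabs_right (/ _)) by (left; apply Rinv_0_lt_compat; auto). unfold Rdiv. rewrite Rmult_1_l.
       rewrite <- (Rmult_1_l (/ INR (Ki i))) at 2. apply Rmult_le_compat_r. left; apply Rinv_0_lt_compat; auto.
       unfold Rabs; destruct Rcase_abs; lra. }
     assert (HP : forall p a b, 0 <= p <= 1 -> 0 <= a -> a <= b -> p * a <= b) by (intros; nra).
     pose proof (HP _ _ _ (pw_bounds x i V) (rsum_nonneg _ _ (fun c _ => ddc_nonneg _ _ _ (gw_nn x i V c Hi NX) (gw_nn y i V c Hi NY))) H0).
     assert (0 < / INR (Ki i)) by (apply Rinv_0_lt_compat; auto).
     unfold Rdiv in *. lra.
   + assert (P1 : pw x i V <= 1 / INR (Ki i)) by (apply (Small x y V); auto; rewrite Ey; congruence).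
     assert (P2 : pw y i V' <= 1 / INR (Ki i)) by (apply (Small y x V'); auto; rewrite Ex; congruence).
     eapply Rle_trans. apply (rsum_le _ (fun c => wfam x i c + wfam y i c)). intros; apply ddc_le_sum; apply wfam_nonneg; auto.
     rewrite rsum_plus. unfold wfam; rewrite Ex, Ey. pose proof (One x V Ex P1). pose proof (One y V' Ey P2).
     unfold Rdiv in *; lra.
 - assert (P1 : pw x i V <= 1 / INR (Ki i)) by (apply (Small x y V); auto; rewrite Ey; congruence).
   eapply Rle_trans. apply (rsum_le _ (fun c => wfam x i c + wfam y i c)). intros; apply ddc_le_sum; apply wfam_nonneg; auto.
   rewrite rsum_plus. unfold wfam at 2; rewrite Ey. rewrite (rsum_ext (fun _ => 0) (fun _ => 0 * 0)) by (intros; ring). rewrite rsum_scal.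
   unfold wfam; rewrite Ex. pose proof (One x V Ex P1). unfold Rdiv in *; lra.
 - assert (P2 : pw y i V' <= 1 / INR (Ki i)) by (apply (Small y x V'); auto; rewrite Ex; congruence).
   eapply Rle_trans. apply (rsum_le _ (fun c => wfam x i c + wfam y i c)). intros; apply ddc_le_sum; apply wfam_nonneg; auto.
   rewrite rsum_plus. unfold wfam at 1; rewrite Ex. rewrite (rsum_ext (fun _ => 0) (fun _ => 0 * 0)) by (intros; ring). rewrite rsum_scal.
   unfold wfam; rewrite Ey. pose proof (One y V' Ey P2). unfold Rdiv in *; lra.
 - unfold wfam; rewrite Ex, Ey. rewrite (rsum_ext _ (fun _ => 0 * 0)). rewrite rsum_scal. unfold Rdiv in *.
   assert (0 < / INR (Ki i)) by (apply Rinv_0_lt_compat; auto). lra.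
   intros; unfold ddc; destruct dec; [rewrite Rminus_0_r, Rabs_R0|]; ring. Qed.


Hypothesis Hcov : is_cover X (family_union X n Us).

Definition Bn : nat := (S n * M)%nat.
Definition wl (x : X) (l : nat) : R := if Nat.leb (l / M)%nat n then wfam x (l / M)%nat (l mod M)%nat else 0.
Definition cl (x : X) (l : nat) : X := cfam x (l / M)%nat (l mod M)%nat.

Lemma M_pos : (0 < M)%nat. Proof. unfold Mcol; lia. Qed.

Lemma wl_nonneg x l : 0 <= wl x l.
Proof. unfold wl. destruct (Nat.leb_spec (l / M)%nat n); [apply wfam_nonneg; auto|lra]. Qed.

Lemma wl_block (f : nat -> nat -> R) : rsum (fun l => f (l / M)%nat (l mod M)%nat) (seq 0 Bn) = rsum (fun i => rsum (fun c => f i c) (seq 0 M)) (seq 0 (S n)).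
Proof. unfold Bn. rewrite rsum_block. apply rsum_ext. intros i _. apply rsum_ext. intros c Hc. apply in_seq in Hc.
 destruct (divmod_block i c M) as [-> ->]; auto; lia. Qed.

Lemma total_ge1 x : 1 <= rsum (wl x) (seq 0 Bn).
Proof. destruct (Hcov x) as [A [[i0 [Hi0 UA]] Ax]].
 assert (NA : nearV x i0 A). { split; auto. exists x; split; auto. rewrite (proj2 (Defs.dist_eq0 X x x) eq_refl).
   pose proof (Ki_pos i0). nra. }
 unfold wl. rewrite (wl_block (fun i c => if Nat.leb i n then wfam x i c else 0)).
 rewrite (rsum_ext _ (fun i => rsum (fun c => wfam x i c) (seq 0 M))).
 2:{ intros i Hi; apply in_seq in Hi. apply rsum_ext; intros c _. destruct (Nat.leb_spec i n); auto; lia. }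
 eapply Rle_trans. 2: apply (rsum_single (fun i => rsum (fun c => wfam x i c) (seq 0 M)) _ i0).
 - unfold wfam. destruct (Vx x i0) eqn:E.
   + pose proof (Vx_some _ _ _ E) as NV. assert (s0 = A) by (apply (near_uniq x i0); auto). subst s0.
     rewrite rsum_scal, gsum_le with (i := i0); auto. unfold pw.
     assert (phi x i0 A = Ki i0). { apply lev_full. intros t Ht. exists x; split; auto.
       rewrite (proj2 (Defs.dist_eq0 X x x) eq_refl). apply le_INR in Ht. simpl in Ht. nra. }
     rewrite H. pose proof (Ki_pos i0). field_simplify; lra.
   + exfalso; apply (Vx_none x i0 A E NA).
 - apply in_seq; lia.
 - apply seq_NoDup.
 - intros i Hi; apply in_seq in Hi. apply rsum_nonneg; intros; apply wfam_nonneg; lia. Qed.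

Lemma total_diff x y : Dst x y < R0 ->
  rsum (dw X cl wl x y) (seq 0 Bn) <= 4 / INR Q + INR (S n) * (4 * INR M / INR Kp).
Proof. intros Hxy. unfold dw, ceqb, cl, wl.
 rewrite (wl_block (fun i c => if dec (cfam x i c = cfam y i c) then Rabs ((if Nat.leb i n then wfam x i c else 0) - (if Nat.leb i n then wfam y i c else 0))
    else (if Nat.leb i n then wfam x i c else 0) + (if Nat.leb i n then wfam y i c else 0))).
 rewrite (rsum_ext _ (fun i => rsum (fun c => ddc (dec (cfam x i c = cfam y i c)) (wfam x i c) (wfam y i c)) (seq 0 M))).
 2:{ intros i Hi; apply in_seq in Hi. apply rsum_ext; intros c _. destruct (Nat.leb_spec i n); [|lia]. reflexivity. }
 eapply Rle_trans. apply (rsum_le _ (fun i => 2 / INR (Ki i) + 4 * INR M / INR Kp)).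
 { intros i Hi; apply in_seq in Hi. apply fam_diff; auto; lia. }
 rewrite rsum_plus, rsum_const, length_seq.
 rewrite (rsum_ext _ (fun i => (2 / INR Q) * / 2 ^ i)). 2:{ intros i _. unfold Ki. rewrite mult_INR, pow_INR. replace (INR 2) with 2 by (simpl; ring).
   assert (0 < INR Q) by (apply lt_0_INR; lia). assert (0 < 2 ^ i) by (apply pow_lt; lra). field. lra. }
 rewrite rsum_scal. pose proof (geo (S n) 0). rewrite pow_O, Rinv_1 in H. assert (0 < INR Q) by (apply lt_0_INR; lia).
 assert (0 < 2 / INR Q) by (unfold Rdiv; apply Rmult_lt_0_compat; [lra|apply Rinv_0_lt_compat; auto]).
 assert (2 / INR Q * rsum (fun i => / 2 ^ i) (seq 0 (S n)) <= 4 / INR Q).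
 { apply Rle_trans with (2 / INR Q * 2). apply Rmult_le_compat_l; lra. unfold Rdiv; lra. }
 lra. Qed.

Lemma cl_close x l : Dst x (cl x l) < 7 * s + 1.
Proof. unfold cl, cfam. destruct (Vx x (l / M)%nat).
 - unfold icen. destruct (jx X s0 N s x0 x (l mod M)%nat) eqn:E.
   + destruct (jx_some _ _ _ _ _ _ _ _ E). lra.
   + rewrite (proj2 (Defs.dist_eq0 X x x) eq_refl). lra.
 - rewrite (proj2 (Defs.dist_eq0 X x x) eq_refl). lra. Qed.

Variables (eps eta : R).
Hypothesis Heps : 0 < eps.
Hypothesis Heta0 : 0 <= eta.
Hypothesis Hee : eta * (2 + eps) <= eps.
Hypothesis HQ : 4 / INR Q <= eta / 2.
Hypothesis HKpe : INR (S n) * (4 * INR M / INR Kp) <= eta / 2.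

Lemma assemble : exists (S0 : R) (A : X -> (X * nat) -> Prop),
      0 < S0 /\
      (forall x, is_finite (A x)) /\
      (forall x, A x (x, 1%nat)) /\
      (forall x p, A x p -> Defs.dist X x (fst p) < S0) /\
      (forall x y, Defs.dist X x y < R0 ->
         forall m k : nat,
           has_card (fun p => (A x p /\ ~ A y p) \/ (A y p /\ ~ A x p)) m ->
           has_card (fun p => A x p /\ A y p) k ->
           INR m < eps * INR k).
Proof. exists (7 * s + 1).
 destruct (discretize X R0 eps (7 * s + 1) eta Bn cl wl) as [A HA]; auto.
 - lra.
 - apply wl_nonneg.
 - apply cl_close.
 - apply total_ge1.
 - intros x y H. eapply Rle_trans. apply total_diff; auto. lra.
 - exists A. split; [lra|exact HA]. Qed.

End Final.

Lemma nat_gt (r : R) : exists n : nat, r < INR n /\ (1 <= n)%nat.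
Proof. destruct (pow2_gt r 1 ltac:(lra)) as [m Hm]. exists (2 ^ m + 1)%nat. split.
 rewrite plus_INR, pow_INR. replace (INR 2) with 2 by (simpl; ring). simpl. lra. lia. Qed.

Lemma div_le a b c : 0 < c -> a <= b * c -> a / c <= b.
Proof. intros Hc H. unfold Rdiv. apply (Rmult_le_reg_r c); auto. rewrite Rmult_assoc, Rinv_l by lra. lra. Qed.

Theorem corollary4p6 (X : MetricSpace) :
  weak_hyperbolic_C X -> property_A X.
Proof.
 intros HC R0 eps HR Heps.
 destruct (classic (inhabited X)) as [[x0]|Hne].
 2:{ exists 1, (fun _ _ => False). split; [lra|]. split; [intros x; exfalso; apply Hne; constructor; exact x|].
     split; [intros x; exfalso; apply Hne; constructor; exact x|]. split; intros x; exfalso; apply Hne; constructor; exact x. }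
 set (eta := eps / (2 + eps)).
 assert (Heta : 0 < eta) by (unfold eta; unfold Rdiv; apply Rmult_lt_0_compat; [lra|apply Rinv_0_lt_compat; lra]).
 assert (Hee : eta * (2 + eps) <= eps) by (unfold eta; right; field; lra).
 destruct (nat_gt (8 / eta)) as [Q [HQ Q1]].
 assert (HQ' : 4 / INR Q <= eta / 2).
 { assert (0 < INR Q) by (apply lt_0_INR; lia). apply div_le; auto.
   assert (8 < eta * INR Q). { apply (Rmult_lt_compat_l eta) in HQ; auto. unfold Rdiv in HQ.
     rewrite <- Rmult_assoc, (Rmult_comm eta 8), Rmult_assoc, Rinv_r in HQ by lra. lra. } lra. }
 assert (HRs : forall i, 0 < Rsq R0 Q i).
 { intros i; unfold Rsq. pose proof (pos_INR (Ki Q i)). nra. }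
 destruct (HC (Rsq R0 Q) HRs) as [n [Us [Hd [Hcov [N [R1 Hdb]]]]]].
 destruct (nat_gt (8 * INR (S n) * INR (Mcol N) / eta)) as [Kp [HKp Kp1]].
 assert (HKpe : INR (S n) * (4 * INR (Mcol N) / INR Kp) <= eta / 2).
 { assert (0 < INR Kp) by (apply lt_0_INR; lia).
   replace (INR (S n) * (4 * INR (Mcol N) / INR Kp)) with ((4 * INR (S n) * INR (Mcol N)) / INR Kp) by (field; lra).
   apply div_le; auto.
   assert (8 * INR (S n) * INR (Mcol N) < eta * INR Kp). { apply (Rmult_lt_compat_l eta) in HKp; auto. unfold Rdiv in HKp.
     rewrite <- Rmult_assoc, (Rmult_comm eta), Rmult_assoc, Rinv_r in HKp by lra. lra. } lra. }
 set (s := Rmax (Rmax R1 1) (Rmax (INR (Ki Q n) * R0) (INR Kp * R0))).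
 assert (S1 : Rmax R1 1 <= s) by apply Rmax_l.
 assert (S2 : Rmax (INR (Ki Q n) * R0) (INR Kp * R0) <= s) by apply Rmax_r.
 pose proof (Rmax_l R1 1). pose proof (Rmax_r R1 1).
 pose proof (Rmax_l (INR (Ki Q n) * R0) (INR Kp * R0)). pose proof (Rmax_r (INR (Ki Q n) * R0) (INR Kp * R0)).
 apply (assemble X R0 Q n Us N R1 s x0 Kp HR Q1 Hd Hdb) with (eta := eta); auto.
 - lra.
 - lra.
 - intros i Hi. assert (Ki Q i <= Ki Q n)%nat. { unfold Ki. apply Nat.mul_le_mono_l. apply Nat.pow_le_mono_r; lia. }
   apply le_INR in H3. apply Rle_trans with (INR (Ki Q n) * R0). apply Rmult_le_compat_r; lra. lra.
 - lra.
 - lra.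
Qed.
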